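(* Let $n,\nu\in\mathbb{N}$ with $1\le\nu\le n$, and let $0=n_0<n_1<\cdots<n_\nu=n$ be integers. Let $m\ge 1$ and, for each $i\in\{1,\dots,m\}$, let $(r_i,a_i,d_i)$ be integers with $0\le a_i<d_i\le\nu$ and $0<r_i\le n_{d_i}-n_{a_i}$. Let $\bm h=(h_1,\dots,h_n)\in\mathbb{N}^n$ satisfy the block monotonicity condition: for every $\kappa\in\{1,\dots,\nu\}$, $h_i\ge h_j$ whenever $n_{\kappa-1}+1\le i<j\le n_\kappa$. Then $\bm h$ is adequate for the demand $(\bm r,\bm a,\bm d)$ if and only if $W_{k_1k_2\cdots k_\nu}(\bm h,\bm r,\bm a,\bm d)\ge 0$ for every integer tuple $(k_1,\dots,k_\nu)$ with $0\le k_\kappa\le n_\kappa-n_{\kappa-1}$ for all $\kappa$.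
   Context: The time horizon consists of $n$ slots; the integers $0=n_0<n_1<\dots<n_\nu=n$ are the admissible arrival times/deadlines. A load with service $(r,a,d)$ requires one unit of power in exactly $r$ of the slots $n_a+1,\dots,n_d$. The supply $\bm h$ is called adequate for the demand $(\bm r,\bm a,\bm d)=((r_i,a_i,d_i))_{i=1}^m$ if there exists an $m\times n$ matrix $A$ with entries in $\{0,1\}$ such that for all $i$: $\sum_{j=1}^n A(i,j)=r_i$ and $A(i,j)=0$ whenever $j\notin\{n_{a_i}+1,\dots,n_{d_i}\}$; and for all $j$: $\sum_{i=1}^m A(i,j)\le h_j$. For $[t]^+=\max\{t,0\}$, the structure tensor is defined, for integers $0\le k_\kappa\le n_\kappa-n_{\kappa-1}$ ($\kappa=1,\dots,\nu$), by $$W_{k_1\cdots k_\nu}(\bm h,\bm r,\bm a,\bm d)=\sum_{\kappa=1}^{\nu}\sum_{j=n_{\kappa-1}+k_\kappa+1}^{n_\kappa}h_j-\sum_{i=1}^m\Big[r_i-\sum_{\kappa=a_i+1}^{d_i}k_\kappa\Big]^+.$$ *)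

(* Defs.v *)
From HB Require Import structures.
From mathcomp Require Import all_boot all_order all_algebra.
Set Implicit Arguments. Unset Strict Implicit. Unset Printing Implicit Defensive.
Import Order.TTheory GRing.Theory Num.Theory.

(* Conventions: slots are indexed 1..n, loads 1..m, blocks 1..nu.
   Nb : nat -> nat gives the breakpoints n_0,...,n_nu (Nb kappa = n_kappa).
   h j is the supply in slot j; r i, a i, d i the service of load i.
   A matrix A is represented as A : nat -> nat -> bool, only entries with
   1 <= i <= m and 1 <= j <= n matter. *)

Definition adequate (n m : nat) (Nb : nat -> nat) (h r a d : nat -> nat) : Prop :=
  exists A : nat -> nat -> bool,
    (forall i, 1 <= i <= m ->
       \sum_(1 <= j < n.+1) (A i j : nat) = r i /\
       (forall j, 1 <= j <= n -> ~~ (Nb (a i) + 1 <= j <= Nb (d i)) -> A i j = false)) /\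
    (forall j, 1 <= j <= n -> \sum_(1 <= i < m.+1) (A i j : nat) <= h j).

Definition pospart (t : int) : int := Num.max 0%R t.

Definition W (nu m : nat) (Nb : nat -> nat) (h r a d : nat -> nat) (k : nat -> nat) : int :=
  (\sum_(1 <= kappa < nu.+1)
      \sum_(Nb kappa.-1 + k kappa + 1 <= j < Nb kappa + 1) (h j)%:Z)%R
  - (\sum_(1 <= i < m.+1)
      pospart ((r i)%:Z - (\sum_(a i + 1 <= kappa < d i + 1) k kappa)%:Z))%R.

(* Main.v *)
Require Import Defs.
From HB Require Import structures.
From mathcomp Require Import all_boot all_order all_algebra.
Import Order.TTheory GRing.Theory Num.Theory.
From mathcomp Require Import zify.
From Stdlib Require Import Classical.
Set Implicit Arguments. Unset Strict Implicit. Unset Printing Implicit Defensive.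

Lemma sum_delta n j0 (F : nat -> nat) : 1 <= j0 <= n ->
  \sum_(1 <= j < n.+1) (j == j0) * F j = F j0.
Proof.
move=> /andP[h1 h2].
rewrite (big_cat_nat (n:=j0)) /=; [|lia|lia].

rewrite [X in _ + X]big_ltn; last lia.
rewrite eqxx mul1n big1_seq ?add0n; last first.
  move=> j /andP[_]; rewrite mem_index_iota => hj.
  by have -> : (j == j0) = false by apply/eqP; lia.
rewrite big1_seq ?addn0 //.
move=> j /andP[_]; rewrite mem_index_iota => hj.
by have -> : (j == j0) = false by apply/eqP; lia.
Qed.

Lemma term_le_sum m i0 (F : nat -> nat) : 1 <= i0 <= m ->
  F i0 <= \sum_(1 <= i < m.+1) F i.
Proof.
move=> hi; rewrite -(sum_delta F hi); apply: leq_sum => i _.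
by case: (i == i0); rewrite ?mul1n ?mul0n.
Qed.

Lemma sum_ones a b : \sum_(a <= j < b) 1 = b - a.
Proof. by rewrite sum_nat_const_nat muln1. Qed.

Definition feas n m (h r : nat -> nat) (W : nat -> nat -> bool) :=
 exists A : nat -> nat -> bool,
  (forall i, 1 <= i <= m -> \sum_(1 <= j < n.+1) (A i j : nat) = r i /\
       (forall j, 1 <= j <= n -> A i j -> W i j)) /\
  (forall j, 1 <= j <= n -> \sum_(1 <= i < m.+1) (A i j : nat) <= h j).

Definition xc n (W : nat -> nat -> bool) (K : nat -> bool) i :=
  \sum_(1 <= j < n.+1) (W i j && K j : nat).
Definition Gf n m r W K := \sum_(1 <= i < m.+1) (r i - xc n W K i).
Definition Hf n (h : nat -> nat) (K : nat -> bool) := \sum_(1 <= j < n.+1) (~~ K j) * h j.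
Definition cond n m h r W := forall K, Gf n m r W K <= Hf n h K.

Lemma feas_cond n m h r W : feas n m h r W -> cond n m h r W.
Proof.
move=> [A [hrow hcol]] K.
apply: (@leq_trans (\sum_(1 <= i < m.+1) \sum_(1 <= j < n.+1) (A i j && ~~ K j : nat))).
  rewrite /Gf big_nat_cond [X in _ <= X]big_nat_cond.
  apply: leq_sum => i /andP[hi _].
  have [hs hw] := hrow i hi.
  rewrite -hs /xc leq_subLR -big_split /=.
  rewrite big_nat_cond [X in _ <= X]big_nat_cond.
  apply: leq_sum => j /andP[hj _].
  have := hw j hj; case: (A i j); case: (K j); by case: (W i j) => //= H; have:= H isT.
rewrite (exchange_big_nat _ 1 m.+1 1 n.+1 xpredT xpredT (fun i j => (A i j && ~~ K j : nat))) /Hf big_nat_cond [X in _ <= X]big_nat_cond.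
apply: leq_sum => j /andP[hj _].
case: (K j) => /=.
  by rewrite big1 // => i _; rewrite andbF.
rewrite mul1n (leq_trans _ (hcol j hj)) //.
by apply: leq_sum => i _; rewrite andbT.
Qed.

Definition wit n m h r W i0 K :=
  Gf n m r W K = Hf n h K /\ r i0 <= xc n W K i0.

Lemma xc_IU n W K L i :
  xc n W (fun j => K j && L j) i + xc n W (fun j => K j || L j) i = xc n W K i + xc n W L i.
Proof.
rewrite /xc -!big_split /=; apply: eq_bigr => j _.
by case: (W i j); case: (K j); case: (L j).
Qed.

Lemma xc_mono n W (K L : nat -> bool) i : (forall j, K j -> L j) -> xc n W K i <= xc n W L i.
Proof.
move=> hKL; apply: leq_sum => j _.
by case: (W i j) => //=; case hK: (K j) => //=; rewrite hKL.
Qed.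

Lemma Hf_IU n h K L :
  Hf n h (fun j => K j && L j) + Hf n h (fun j => K j || L j) = Hf n h K + Hf n h L.
Proof.
rewrite /Hf -!big_split /=; apply: eq_bigr => j _.
by case: (K j); case: (L j); rewrite /= ?mul1n ?mul0n ?addn0.
Qed.

Lemma wit_inter n m h r W i0 K L : cond n m h r W -> 1 <= i0 <= m ->
  wit n m h r W i0 K -> wit n m h r W i0 L -> wit n m h r W i0 (fun j => K j && L j).
Proof.
move=> hc hi0 [hK1 hK2] [hL1 hL2].
set I := (fun j => K j && L j). set U := (fun j => K j || L j).
have hG : Gf n m r W K + Gf n m r W L + (r i0 - xc n W I i0) <= Gf n m r W I + Gf n m r W U.
  rewrite -(sum_delta (fun i => r i - xc n W I i) hi0) /Gf -!big_split /=.
  apply: leq_sum => i _.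
  have e := xc_IU n W K L i.
  have l1 : xc n W I i <= xc n W K i by apply: xc_mono => j /andP[].
  have l2 : xc n W I i <= xc n W L i by apply: xc_mono => j /andP[].
  case: (eqVneq i i0) => [->|_] /=.
    rewrite mul1n; move: e l1 l2; rewrite -/I -/U. lia.
  rewrite mul0n addn0; move: e l1 l2; rewrite -/I -/U. lia.
have hH := Hf_IU n h K L.
have c1 := hc I. have c2 := hc U.
rewrite -/I -/U in hH.
split; lia.
Qed.

Definition cnt n (K : nat -> bool) := \sum_(1 <= j < n.+1) (K j : nat).

Lemma good_exists n m h r W i0 : cond n m h r W -> 1 <= i0 <= m -> 0 < r i0 ->
  exists j0, [/\ 1 <= j0 <= n, W i0 j0, 0 < h j0 &
     forall K, ~~ K j0 -> r i0 <= xc n W K i0 -> Gf n m r W K < Hf n h K].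
Proof.
move=> hc hi0 hr.
apply: NNPP => Hno.
have bad : forall j, 1 <= j <= n -> W i0 j -> 0 < h j ->
    exists L, ~~ L j /\ wit n m h r W i0 L.
  move=> j hj hw hh; apply: NNPP => Hn; apply: Hno; exists j; split => //.
  move=> K hK hx; rewrite ltnNge; apply/negP => hle; apply: Hn; exists K; split => //.
  by split => //; apply/eqP; rewrite eqn_leq hc hle.
have main : forall c K, cnt n K <= c -> wit n m h r W i0 K -> False.
  elim=> [|c IH] K hcnt [hK1 hK2].
    have : xc n W K i0 <= cnt n K by apply: leq_sum => j _; case: (W i0 j).
    lia.
  case: (classic (exists j, [/\ 1 <= j <= n, K j, W i0 j & 0 < h j])).
    move=> [j [hj hKj hWj hhj]].
    have [L [hLj hL]] := bad j hj hWj hhj.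
    apply: (IH (fun j => K j && L j)); last exact: wit_inter.
    have : cnt n (fun j => K j && L j) + 1 <= cnt n K.
      rewrite -(sum_delta (fun _ => 1) hj) /cnt -big_split /=.
      apply: leq_sum => i _.
      case: (eqVneq i j) => [->|_]; first by rewrite (negbTE hLj) hKj.
      by rewrite muln1 addn0; case: (K i); case: (L i).
    lia.
  move=> hno.
  pose K1 := fun j => K j && ~~ W i0 j.
  have hH : Hf n h K1 = Hf n h K.
    rewrite /Hf big_nat_cond [RHS]big_nat_cond; apply: eq_bigr => j /andP[hj _].
    rewrite /K1; case hKj: (K j) => //=; case hWj: (W i0 j) => //=.
    case: (posnP (h j)) => [->|hp]; first by rewrite muln0.
    by exfalso; apply: hno; exists j; split.
  have hG : Gf n m r W K + r i0 <= Gf n m r W K1.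
    rewrite -(sum_delta (fun _ => r i0) hi0) /Gf -big_split /=.
    apply: leq_sum => i _.
    case: (eqVneq i i0) => [->|_].
      have -> : xc n W K1 i0 = 0.
        by rewrite /xc big1 // => j _; rewrite /K1; case: (W i0 j); rewrite ?andbF.
      move: hK2; lia.
    by rewrite mul0n addn0 leq_sub2l //; apply: xc_mono => j /andP[].
  have := hc K1; lia.
apply: (main (cnt n (fun _ => true)) (fun _ => true) (leqnn _)).
have hH : Hf n h (fun _ => true) = 0 by rewrite /Hf big1.
have hG := hc (fun _ => true); rewrite hH leqn0 in hG.
split; first by rewrite hH; apply/eqP.
have := term_le_sum (fun i => r i - xc n W (fun _ => true) i) hi0.
rewrite -/(Gf n m r W (fun _ => true)) (eqP hG); lia.
Qed.

Lemma cond_feas N n m h r W : \sum_(1 <= i < m.+1) r i = N -> cond n m h r W -> feas n m h r W.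
Proof.
elim: N h r W => [|N IH] h r W hN hc.
  exists (fun _ _ => false); split.
    move=> i hi; split => //; rewrite big1 //.
    by have := term_le_sum r hi; rewrite hN; lia.
  by move=> j _; rewrite big1.
case: (classic (exists i0, 1 <= i0 <= m /\ 0 < r i0)); last first.
  move=> hno; exfalso.
  have : \sum_(1 <= i < m.+1) r i = 0.
    rewrite big_nat_cond big1 // => i /andP[hi _].
    by case: (posnP (r i)) => // hp; exfalso; apply: hno; exists i.
  by rewrite hN.
move=> [i0 [hi0 hr0]].
have [j0 [hj0 hW0 hh0 hgood]] := good_exists hc hi0 hr0.
pose h' := fun l => h l - (l == j0).
pose r' := fun i => r i - (i == i0).
pose W' := fun i j => W i j && ~~ ((i == i0) && (j == j0)).
have er : forall i, r i = r' i + (i == i0) * 1.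
  by move=> i; rewrite /r'; case: (eqVneq i i0) => [->|]; rewrite /=; lia.
have eh : forall j, h j = h' j + (j == j0) * 1.
  by move=> j; rewrite /h'; case: (eqVneq j j0) => [->|]; rewrite /=; lia.
have hN' : \sum_(1 <= i < m.+1) r' i = N.
  move: hN; rewrite (eq_bigr _ (fun i _ => er i)) big_split /= sum_delta //; lia.
have hc' : cond n m h' r' W'.
  move=> K.
  have ex : forall i, xc n W K i = xc n W' K i + ((i == i0) && K j0).
    move=> i; rewrite /xc -(sum_delta (fun j => ((i == i0) && K j : nat)) hj0) -big_split /=.
    apply: eq_bigr => j _; rewrite /W'.
    case: (eqVneq i i0) => [->|]; case: (eqVneq j j0) => [->|] /=;
      rewrite ?hW0 ?muln0 ?mul0n ?mul1n ?addn0 //; by case: (K _); case: (W _ _).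
  have ehf : Hf n h K = Hf n h' K + ~~ K j0.
    rewrite /Hf -(sum_delta (fun j => (~~ K j : nat)) hj0) -big_split /=.
    apply: eq_bigr => j _; rewrite eh mulnDr; congr (_ + _).
    by case: (eqVneq j j0) => [->|]; rewrite ?mul1n ?mul0n ?muln1 ?muln0.
  have hcK := hc K.
  case hKj0: (K j0).
    have : Gf n m r' W' K = Gf n m r W K.
      apply: eq_bigr => i _; rewrite ex er hKj0 andbT.
      by case: (i == i0); rewrite /= ?addn0 ?muln1 ?subnDr.
    move=> e; move: ehf hcK; rewrite hKj0 e /= addn0 => ->; done.
  rewrite hKj0 /= in ehf.
  have ex' : forall i, xc n W K i = xc n W' K i by move=> i; rewrite ex hKj0 andbF addn0.
  case: (leqP (r i0) (xc n W K i0)) => hx.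
    have hlt := hgood K (negbT hKj0) hx.
    have : Gf n m r' W' K <= Gf n m r W K.
      apply: leq_sum => i _; rewrite ex'; apply: leq_sub2r; rewrite er; apply: leq_addr.
    lia.
  have : Gf n m r' W' K + 1 <= Gf n m r W K.
    rewrite -[X in _ + X <= _](sum_delta (fun _ => 1) hi0) /Gf -big_split /=.
    apply: leq_sum => i _; rewrite -ex' (er i).
    case: (eqVneq i i0) => [->|]; last by rewrite /= !mul0n !addn0.
    move: hx; rewrite (er i0) eqxx; lia.
  lia.
have [A' [hrow hcol]] := IH h' r' W' hN' hc'.
have hA0 : A' i0 j0 = false.
  apply/negP => hA; have := (hrow i0 hi0).2 j0 hj0 hA.
  by rewrite /W' !eqxx andbF.
exists (fun i j => A' i j || (i == i0) && (j == j0)); split.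
  move=> i hi; split.
    rewrite (eq_bigr (fun j => A' i j + (j == j0) * (i == i0))); last first.
      move=> j _; case: (eqVneq i i0) => [->|]; case: (eqVneq j j0) => [->|] /=;
        rewrite ?hA0 ?muln0 ?mul0n ?mul1n ?addn0 ?orbF //.
    rewrite big_split /= sum_delta // (hrow i hi).1 (er i).
    by case: (i == i0).
  move=> j hj /orP[hA|/andP[/eqP -> /eqP ->]] //.
  by have := (hrow i hi).2 j hj hA; rewrite /W' => /andP[].
move=> j hj.
rewrite (eq_bigr (fun i => A' i j + (i == i0) * (j == j0))); last first.
  move=> i _; case: (eqVneq i i0) => [->|]; case: (eqVneq j j0) => [->|] /=;
    rewrite ?hA0 ?muln0 ?mul0n ?mul1n ?addn0 ?orbF //.
rewrite big_split /= sum_delta // (eh j).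
by rewrite muln1 leq_add2r hcol.
Qed.

Lemma feas_iff n m h r W : feas n m h r W <-> cond n m h r W.
Proof. split; [exact: feas_cond | exact: cond_feas]. Qed.

Lemma Nb_mono nu (Nb : nat -> nat) : (forall kappa, kappa < nu -> Nb kappa < Nb kappa.+1) ->
  forall p q, p <= q <= nu -> Nb p + (q - p) <= Nb q.
Proof.
move=> hNb p; elim=> [|q IH] /andP[hpq hq].
  have -> : p = 0 by lia.
  by rewrite subnn addn0.
case: (eqVneq p q.+1) => [->|hne]; first by rewrite subnn addn0.
have := IH (ltac:(apply/andP; split; lia)); have := hNb q (ltac:(lia)); lia.
Qed.

Lemma blocksum nu (Nb : nat -> nat) (F : nat -> nat) :
  (forall kappa, kappa < nu -> Nb kappa < Nb kappa.+1) ->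
  forall s t, s <= t <= nu ->
  \sum_(s + 1 <= kappa < t + 1) \sum_(Nb kappa.-1 + 1 <= j < Nb kappa + 1) F j
  = \sum_(Nb s + 1 <= j < Nb t + 1) F j.
Proof.
move=> hNb s; elim=> [|t IH] /andP[hst ht].
  have -> : s = 0 by lia.
  by rewrite !big_geq.
case: (eqVneq s t.+1) => [->|hne]; first by rewrite !big_geq.
rewrite (_ : t.+1 + 1 = (t + 1).+1); last lia.
rewrite big_nat_recr /=; last lia.
rewrite IH; last (apply/andP; split; lia).
have m1 := Nb_mono hNb (ltac:(apply/andP; split; lia) : s <= t <= nu).
have m2 := hNb t (ltac:(lia)).
rewrite (_ : t + 1 = t.+1) /=; last lia.
rewrite -(big_cat_nat (n := Nb t + 1)) //; lia.
Qed.

Lemma restrict n lo hi (F : nat -> nat) : 1 <= lo -> hi <= n -> lo <= hi.+1 ->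
  \sum_(1 <= j < n.+1) ((lo <= j <= hi) * F j) = \sum_(lo <= j < hi.+1) F j.
Proof.
move=> h1 h2 h3.
rewrite (big_cat_nat (n := lo)) /=; [|lia|lia].
rewrite [X in _ + X](big_cat_nat (n := hi.+1)) /=; [|lia|lia].
rewrite [X in X + _]big1_seq; last first.
  by move=> j /andP[_]; rewrite mem_index_iota => hj; have -> : (lo <= j <= hi) = false by lia.
rewrite [X in _ + (_ + X)]big1_seq; last first.
  by move=> j /andP[_]; rewrite mem_index_iota => hj; have -> : (lo <= j <= hi) = false by lia.
rewrite add0n addn0 big_seq_cond [RHS]big_seq_cond; apply: eq_bigr => j /andP[].
rewrite mem_index_iota ltnS => /andP[-> ->] _; by rewrite mul1n.
Qed.

Lemma rearr s T (f : nat -> nat) (K : nat -> bool) :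
  (forall i j, s + 1 <= i -> i < j -> j <= T -> f j <= f i) ->
  forall u, s + u <= T ->
  \sum_(s + (\sum_(s + 1 <= j < s + u + 1) (K j : nat)) + 1 <= j < s + u + 1) f j
    <= \sum_(s + 1 <= j < s + u + 1) ~~ K j * f j.
Proof.
move=> hmon; elim=> [|u IH] hu.
  have -> : \sum_(s + 1 <= j < s + 0 + 1) (K j : nat) = 0 by rewrite addn0 big_geq.
  by rewrite !addn0 !big_geq.
have hc : \sum_(s + 1 <= j < s + u + 1) (K j : nat) <= u.
  apply: (@leq_trans (\sum_(s + 1 <= j < s + u + 1) 1)); first by apply: leq_sum => j _; case: (K j).
  by rewrite sum_ones; lia.
have e : s + u.+1 + 1 = (s + u + 1).+1 by lia.
set c := \sum_(s + 1 <= j < s + u + 1) (K j : nat).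
have IH' := IH (ltac:(lia)); rewrite -/c in IH' hc.
have ec : \sum_(s + 1 <= j < (s + u + 1).+1) (K j : nat) = c + K (s + u + 1).
  by rewrite big_nat_recr //=; lia.
have er : \sum_(s + 1 <= j < (s + u + 1).+1) ~~ K j * f j =
   \sum_(s + 1 <= j < s + u + 1) ~~ K j * f j + ~~ K (s + u + 1) * f (s + u + 1).
  by rewrite big_nat_recr //=; lia.
rewrite e ec er.
case hK: (K (s + u + 1)) => /=.
  rewrite mul0n addn0.
  case: (eqVneq c u) => [->|hne]; first by rewrite big_geq //; lia.
  apply: leq_trans IH'.
  rewrite (@big_ltn _ _ _ (s + c + 1)); last lia.
  rewrite big_nat_recr /=; last lia.
  rewrite (_ : (s + c + 1).+1 = s + (c + 1) + 1); last lia.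
  rewrite addnC leq_add2r; apply: hmon; lia.
rewrite !addn0 mul1n big_nat_recr /=; last lia.
by rewrite leq_add2r.
Qed.

Lemma pospart_nat (x y : nat) : (pospart (x%:Z - y%:Z) = (x - y)%N%:Z)%R.
Proof.
rewrite /pospart; case: (leqP y x) => hxy.
  rewrite subzn // max_r //.
case: (x - y =P 0)%N => [->|]; last lia.
rewrite max_l // subr_le0 lez_nat; lia.
Qed.

Lemma Posz_sum (s : seq nat) (F : nat -> nat) :
  ((\sum_(i <- s) F i)%N%:Z = \sum_(i <- s) (F i)%:Z)%R.
Proof. exact: (big_morph Posz PoszD (erefl _)). Qed.

Lemma W_nat nu m Nb h r a d k :
  W nu m Nb h r a d k =
  ((\sum_(1 <= kappa < nu.+1) \sum_(Nb kappa.-1 + k kappa + 1 <= j < Nb kappa + 1) h j)%N%:Z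
   - (\sum_(1 <= i < m.+1) (r i - \sum_(a i + 1 <= kappa < d i + 1) k kappa))%N%:Z)%R.
Proof.
rewrite /W; congr (_ - _)%R.
  by rewrite Posz_sum; apply: eq_bigr => kappa _; rewrite Posz_sum.
by rewrite Posz_sum; apply: eq_bigr => i _; rewrite pospart_nat.
Qed.

Lemma blockK (K : nat -> bool) s kk t (f : nat -> nat) : s + kk <= t ->
  (forall j, s < j <= t -> K j = (j <= s + kk)) ->
  \sum_(s + 1 <= j < t + 1) (K j : nat) = kk /\
  \sum_(s + 1 <= j < t + 1) ~~ K j * f j = \sum_(s + kk + 1 <= j < t + 1) f j.
Proof.
move=> hst hK.
have e1 : \sum_(s + 1 <= j < t + 1) (K j : nat) = \sum_(s + 1 <= j < t + 1) (j <= s + kk : nat).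
  rewrite big_seq_cond [RHS]big_seq_cond; apply: eq_bigr => j.
  by rewrite mem_index_iota andbT => hj; rewrite hK //; lia.
have e2 : \sum_(s + 1 <= j < t + 1) ~~ K j * f j = \sum_(s + 1 <= j < t + 1) ~~ (j <= s + kk) * f j.
  rewrite big_seq_cond [RHS]big_seq_cond; apply: eq_bigr => j.
  by rewrite mem_index_iota andbT => hj; rewrite hK //; lia.
rewrite e1 e2 !(big_cat_nat (n := s + kk + 1) (m := s + 1) (p := t + 1)); try lia.
split.
  rewrite [X in _ + X = _]big1_seq ?addn0; last first.
    by move=> j /andP[_]; rewrite mem_index_iota => hj; have -> : (j <= s + kk) = false by lia.
  rewrite big_seq_cond (eq_bigr (fun _ => 1)) -?big_seq_cond ?sum_ones; first lia.
  by move=> j /andP[]; rewrite mem_index_iota => hj _; have -> : (j <= s + kk) by lia.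
rewrite [X in X + _ = _]big1_seq ?add0n; last first.
  by move=> j /andP[_]; rewrite mem_index_iota => hj; have -> : (j <= s + kk) by lia.
rewrite big_seq_cond [RHS]big_seq_cond; apply: eq_bigr => j /andP[].
rewrite mem_index_iota addn1 => /andP[h1 _] _; by rewrite leqNgt h1 mul1n.
Qed.

Definition Kk (nu : nat) (Nb k : nat -> nat) (j : nat) : bool :=
  has (fun kap => (Nb kap.-1 < j) && (j <= Nb kap.-1 + k kap)) (iota 1 nu).

Lemma Kk_block nu Nb k : (forall kappa, kappa < nu -> Nb kappa < Nb kappa.+1) ->
  (forall kappa, 1 <= kappa <= nu -> k kappa <= Nb kappa - Nb kappa.-1) ->
  forall kap j, 1 <= kap <= nu -> Nb kap.-1 < j <= Nb kap ->
  Kk nu Nb k j = (j <= Nb kap.-1 + k kap).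
Proof.
move=> hNb hk kap j hkap hj.
have hm := Nb_mono hNb.
case E: (j <= Nb kap.-1 + k kap).
  apply/hasP; exists kap; first by rewrite mem_iota; lia.
  by rewrite E andbT; case/andP: hj.
apply/hasP => -[kap' hin /andP[h1 h2]].
rewrite mem_iota in hin.
have hk' := hk kap' (ltac:(lia)).
have hk0 := hk kap hkap.
case: (ltngtP kap' kap) => hc.
- have := hm kap' kap.-1 (ltac:(lia)).
  have := hm kap'.-1 kap' (ltac:(lia)).
  lia.
- have := hm kap kap'.-1 (ltac:(lia)).
  lia.
- by move: E; rewrite -hc h2.
Qed.

Unset Implicit Arguments.
Theorem theorem1 (n nu : nat) (Nb : nat -> nat) (m : nat) (r a d h : nat -> nat) :
  1 <= nu <= n ->
  Nb 0 = 0 ->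
  (forall kappa, kappa < nu -> Nb kappa < Nb kappa.+1) ->
  Nb nu = n ->
  1 <= m ->
  (forall i, 1 <= i <= m ->
     [/\ a i < d i, d i <= nu, 0 < r i & r i <= Nb (d i) - Nb (a i)]) ->
  (forall kappa, 1 <= kappa <= nu ->
     forall i j, Nb kappa.-1 + 1 <= i -> i < j -> j <= Nb kappa -> h j <= h i) ->
  (adequate n m Nb h r a d <->
   forall k : nat -> nat,
     (forall kappa, 1 <= kappa <= nu -> k kappa <= Nb kappa - Nb kappa.-1) ->
     (0 <= W nu m Nb h r a d k)%R).
Proof.
move=> hnu hNb0 hNb hNbn hm hload hmon.
pose Wn := fun i j => Nb (a i) + 1 <= j <= Nb (d i).
have hmono := Nb_mono hNb.
have ad : adequate n m Nb h r a d <-> feas n m h r Wn.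
  split=> -[A [hrow hcol]]; exists A; split => // i hi; have [hs hw] := hrow i hi; split => //.
    by move=> j hj hA; apply/negPn/negP => hn; have := hw j hj hn; rewrite hA.
  by move=> j hj hn; apply/negP => hA; have := hw j hj hA; rewrite /Wn (negbTE hn).
rewrite ad feas_iff.
have xcE : forall K i, 1 <= i <= m -> xc n Wn K i =
    \sum_(a i + 1 <= kap < d i + 1) \sum_(Nb kap.-1 + 1 <= j < Nb kap + 1) (K j : nat).
  move=> K i hi; have [h1 h2 _ _] := hload i hi.
  rewrite /xc (eq_bigr (fun j => (Nb (a i) + 1 <= j <= Nb (d i)) * K j)); last by move=> j _; rewrite mulnb.
  rewrite restrict; first last.
  - have := hmono (a i) (d i) (ltac:(lia)); lia.
  - have := hmono (d i) nu (ltac:(lia)); lia.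
  - lia.
  rewrite (blocksum (fun j => (K j : nat)) hNb (ltac:(lia) : a i <= d i <= nu)); first last.
  by rewrite -[(Nb (d i)).+1]addn1.
have HfE : forall K, Hf n h K =
    \sum_(1 <= kap < nu.+1) \sum_(Nb kap.-1 + 1 <= j < Nb kap + 1) ~~ K j * h j.
  move=> K; have := blocksum (fun j => ~~ K j * h j) hNb (ltac:(lia) : 0 <= nu <= nu).
  by rewrite hNb0 hNbn add0n !addn1 /Hf => ->.
split.
  move=> hc k hk; rewrite W_nat subr_ge0 lez_nat.
  have blk : forall kap, 1 <= kap <= nu ->
      \sum_(Nb kap.-1 + 1 <= j < Nb kap + 1) (Kk nu Nb k j : nat) = k kap /\
      \sum_(Nb kap.-1 + 1 <= j < Nb kap + 1) ~~ Kk nu Nb k j * h j =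
      \sum_(Nb kap.-1 + k kap + 1 <= j < Nb kap + 1) h j.
    move=> kap hkap; apply: blockK.
      have := hk kap hkap; have := hNb kap.-1 (ltac:(lia)); rewrite prednK; lia.
    by move=> j hj; apply: Kk_block.
  have eG : Gf n m r Wn (Kk nu Nb k) =
      \sum_(1 <= i < m.+1) (r i - \sum_(a i + 1 <= kap < d i + 1) k kap).
    apply: eq_big_nat => i hi; rewrite xcE //; congr (_ - _); apply: eq_big_nat => kap hkap.
    have [h1 h2 _ _] := hload i hi.
    by rewrite (blk kap (ltac:(lia))).1.
  have eH : Hf n h (Kk nu Nb k) =
      \sum_(1 <= kap < nu.+1) \sum_(Nb kap.-1 + k kap + 1 <= j < Nb kap + 1) h j.
    by rewrite HfE; apply: eq_big_nat => kap hkap; rewrite (blk kap (ltac:(lia))).2.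
  by rewrite -eG -eH.
move=> hW K.
pose k := fun kap => \sum_(Nb kap.-1 + 1 <= j < Nb kap + 1) (K j : nat).
have hk : forall kap, 1 <= kap <= nu -> k kap <= Nb kap - Nb kap.-1.
  move=> kap _; apply: (@leq_trans (\sum_(Nb kap.-1 + 1 <= j < Nb kap + 1) 1)).
    by apply: leq_sum => j _; case: (K j).
  by rewrite sum_ones; lia.
have := hW k hk; rewrite W_nat subr_ge0 lez_nat => hle.
have eG : Gf n m r Wn K =
    \sum_(1 <= i < m.+1) (r i - \sum_(a i + 1 <= kap < d i + 1) k kap).
  by apply: eq_big_nat => i hi; rewrite xcE.
rewrite eG HfE.
apply: (leq_trans hle).
rewrite big_nat_cond [X in _ <= X]big_nat_cond; apply: leq_sum => kap /andP[hkap _].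
have hlt := hNb kap.-1 (ltac:(lia)); rewrite prednK in hlt; last lia.
have := rearr K (s := Nb kap.-1) (T := Nb kap) (f := h) (hmon kap (ltac:(lia)))
          (u := Nb kap - Nb kap.-1) (ltac:(lia)).
by rewrite (_ : Nb kap.-1 + (Nb kap - Nb kap.-1) = Nb kap); last lia.
Qed.
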